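(* Let $V$ be a quasi-regular mixed lattice vector space and $A$ a linear subspace of $V$. Then $A$ is an ideal if and only if: whenever $x\in V$, $y\in A$ and $s(x)\le s(y)$, we have $x\in A$.
   Context: A mixed lattice vector space is a real vector space $V$ with two partial orderings $\le$ (initial) and $\preceq$ (specific), each compatible with the vector space structure, such that for all $x,y$ the mixed lower envelope $x\curlywedge y=\max\{w: w\preceq x,\ w\le y\}$ and mixed upper envelope $x\curlyvee y=\min\{w: x\preceq w,\ y\le w\}$ exist (max/min with respect to $\le$). $V$ is quasi-regular if $V_{sp}=\{x:0\preceq x\}$ is closed under $\curlywedge,\curlyvee$. An ideal is a linear subspace closed under $\curlywedge,\curlyvee$ which is $(\le)$-order convex ($x\le z\le y$ with $x,y$ in it implies $z$ in it). The symmetric generalized absolute value of $x$ is $s(x)=\tfrac12\big((x\curlyvee 0)+(0\curlyvee(-x))+((-x)\curlyvee 0)+(0\curlyvee x)\big)$. *)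

(* Defs.v *)
From HB Require Import structures.
From mathcomp Require Import all_boot all_order all_algebra.
From mathcomp Require Import reals.
Set Implicit Arguments. Unset Strict Implicit. Unset Printing Implicit Defensive.
Import Order.TTheory GRing.Theory Num.Theory.
Local Open Scope ring_scope.

Definition partial_order (T : Type) (r : T -> T -> Prop) : Prop :=
  (forall x, r x x) /\ (forall x y, r x y -> r y x -> x = y) /\
  (forall x y z, r x y -> r y z -> r x z).

Definition vs_compatible (R : realType) (V : lmodType R) (r : V -> V -> Prop) : Prop :=
  (forall x y z : V, r x y -> r (x + z) (y + z)) /\
  (forall (a : R) (x y : V), 0 <= a -> r x y -> r (a *: x) (a *: y)).

(* A mixed lattice vector space structure on V: initial order [ml_le],
   specific order [ml_sp], and the mixed envelopes (whose existence is part
   of the definition; they are uniquely determined by antisymmetry). *)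
Record mixed_lattice (R : realType) (V : lmodType R) := MixedLattice {
  ml_le : V -> V -> Prop;
  ml_sp : V -> V -> Prop;
  ml_low : V -> V -> V;
  ml_up : V -> V -> V;
  ml_le_po : partial_order ml_le;
  ml_sp_po : partial_order ml_sp;
  ml_le_comp : vs_compatible ml_le;
  ml_sp_comp : vs_compatible ml_sp;
  ml_low_spec : forall x y, ml_sp (ml_low x y) x /\ ml_le (ml_low x y) y /\
     (forall w, ml_sp w x -> ml_le w y -> ml_le w (ml_low x y));
  ml_up_spec : forall x y, ml_sp x (ml_up x y) /\ ml_le y (ml_up x y) /\
     (forall w, ml_sp x w -> ml_le y w -> ml_le (ml_up x y) w)
}.

Definition quasi_regular (R : realType) (V : lmodType R) (M : mixed_lattice V) : Prop :=
  forall x y : V, ml_sp M 0 x -> ml_sp M 0 y ->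
    ml_sp M 0 (ml_low M x y) /\ ml_sp M 0 (ml_up M x y).

Definition linear_subspace (R : realType) (V : lmodType R) (A : V -> Prop) : Prop :=
  A 0 /\ (forall x y, A x -> A y -> A (x + y)) /\
  (forall (a : R) x, A x -> A (a *: x)).

Definition ml_ideal (R : realType) (V : lmodType R) (M : mixed_lattice V)
  (A : V -> Prop) : Prop :=
  linear_subspace A /\
  (forall x y, A x -> A y -> A (ml_low M x y) /\ A (ml_up M x y)) /\
  (forall x y z, A x -> A y -> ml_le M x z -> ml_le M z y -> A z).

Definition sabs (R : realType) (V : lmodType R) (M : mixed_lattice V) (x : V) : V :=
  (2%:R : R)^-1 *: (ml_up M x 0 + ml_up M 0 (- x) + ml_up M (- x) 0 + ml_up M 0 x).

(* Main.v *)
Require Import Defs.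
From HB Require Import structures.
From mathcomp Require Import all_boot all_order all_algebra.
From mathcomp Require Import reals.
Import Order.TTheory GRing.Theory Num.Theory.
Local Open Scope ring_scope.

Lemma po_refl {T : Type} {r : T -> T -> Prop} : partial_order r -> forall x, r x x.
Proof. by case. Qed.
Lemma po_anti {T : Type} {r : T -> T -> Prop} (p : partial_order r)
  {x y} : r x y -> r y x -> x = y.
Proof. by case: p => _ [H _]; apply: H. Qed.
Lemma po_trans {T : Type} {r : T -> T -> Prop} (p : partial_order r)
  {x} y {z} : r x y -> r y z -> r x z.
Proof. by case: p => _ [_ H]; apply: H. Qed.

Lemma cp_add {R : realType} {V : lmodType R} {r : V -> V -> Prop}
  (c : vs_compatible r) (z : V) {x y : V} (h : r x y) : r (x + z) (y + z).
Proof. by case: c => H _; apply: H. Qed.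

Lemma cp_to0 {R : realType} {V : lmodType R} {r : V -> V -> Prop} :
  vs_compatible r -> forall x y, r x y -> r 0 (y - x).
Proof. move=> c x y h; have := cp_add c (- x) h; by rewrite subrr. Qed.

Lemma cp_from0 {R : realType} {V : lmodType R} {r : V -> V -> Prop} :
  vs_compatible r -> forall x y, r 0 (y - x) -> r x y.
Proof. move=> c x y h; have := cp_add c x h; by rewrite add0r subrK. Qed.

Lemma cp_neg {R : realType} {V : lmodType R} {r : V -> V -> Prop} :
  vs_compatible r -> forall x y, r x y -> r (- y) (- x).
Proof. move=> c x y h; apply: cp_from0 => //; rewrite opprK addrC; exact: cp_to0. Qed.

Lemma cp_addpos {R : realType} {V : lmodType R} {r : V -> V -> Prop} :
  partial_order r -> vs_compatible r -> forall a b, r 0 a -> r 0 b -> r 0 (a + b).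
Proof.
move=> p c a b ha hb; apply: (po_trans p b) => //.
have := cp_add c b ha; by rewrite add0r addrC.
Qed.

Lemma cp_addle {R : realType} {V : lmodType R} {r : V -> V -> Prop}
  (p : partial_order r) (c : vs_compatible r) {a b x y : V} (h1 : r a b) (h2 : r x y) : r (a + x) (b + y).
Proof.
 apply: cp_from0 => //.
have -> : b + y - (a + x) = (b - a) + (y - x).
  by rewrite opprD addrACA.
by apply: cp_addpos => //; apply: cp_to0.
Qed.

Lemma alg_id {V : zmodType} (x a b : V) : x + b + b + (- x + a) + a = (a + b) + (a + b).
Proof.
rewrite -(addrA x b b) addrACA subrr add0r.
by rewrite [RHS]addrACA -[LHS]addrA addrC.
Qed.

Section S.
Context {R : realType} {V : lmodType R} {M : mixed_lattice V}.
Hypothesis hqr : quasi_regular M.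

Local Notation le := (ml_le M).
Local Notation sp := (ml_sp M).
Local Notation m := (ml_up M 0).

Let lep := ml_le_po M.
Let spp := ml_sp_po M.
Let lec := ml_le_comp M.
Let spc := ml_sp_comp M.

Lemma sp_le0 u : sp 0 u -> le 0 u.
Proof.
move=> hu.
have [h1 [h2 _]] := ml_low_spec M 0 u.
have [h3 _] := hqr 0 u (po_refl spp 0) hu.
by rewrite -(po_anti spp h1 h3).
Qed.

Lemma sp_le x y : sp x y -> le x y.
Proof. move=> h; apply: cp_from0 => //; apply: sp_le0; exact: cp_to0. Qed.

Lemma m_ge y : le y (m y). Proof. by have [_ []] := ml_up_spec M 0 y. Qed.
Lemma m_sp y : sp 0 (m y). Proof. by have [] := ml_up_spec M 0 y. Qed.
Lemma m_min y w : sp 0 w -> le y w -> le (m y) w.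
Proof. by have [_ [_]] := ml_up_spec M 0 y; apply. Qed.
Lemma m_pos y : le 0 (m y). Proof. exact: sp_le0 (m_sp y). Qed.
Lemma m_id k : sp 0 k -> m k = k.
Proof. move=> h; apply: (po_anti lep); [exact: m_min (po_refl lep _)|exact: m_ge]. Qed.
Lemma m_negK k : sp 0 k -> m (- k) = 0.
Proof.
move=> h; apply: (po_anti lep); last exact: m_pos.
apply: m_min; first exact: po_refl.
by rewrite -oppr0; apply: cp_neg => //; apply: sp_le0.
Qed.
Lemma m_mon y y' : le y y' -> le (m y) (m y').
Proof. move=> h; apply: m_min; first exact: m_sp. exact: (po_trans lep y' h (m_ge _)). Qed.

Lemma up_x0 x : ml_up M x 0 = x + m (- x).
Proof.
have [a1 [a2 a3]] := ml_up_spec M x 0.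
apply: (po_anti lep).
- apply: a3.
  + apply: cp_from0 => //; rewrite [x + _]addrC addrK; exact: m_sp.
  + apply: cp_from0 => //; rewrite subr0; have := cp_add lec x (m_ge (- x)).
    by rewrite addNr addrC.
- have h : le (m (- x)) (ml_up M x 0 - x).
    apply: m_min; first exact: cp_to0.
    have := cp_add lec (- x) a2; by rewrite add0r addrC.
  have := cp_add lec x h; by rewrite subrK addrC.
Qed.

Lemma sabsE x : sabs M x = m x + m (- x).
Proof.
rewrite /sabs up_x0 up_x0 opprK.
have -> : x + m (- x) + m (- x) + (- x + m x) + m x = 2%:R *: (m x + m (- x)).
  by rewrite scaler_nat mulr2n alg_id.
rewrite scalerA mulVf ?scale1r //.
by rewrite pnatr_eq0.
Qed.

Lemma sabs_sp x : sp 0 (sabs M x).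
Proof. rewrite sabsE; apply: cp_addpos => //; exact: m_sp. Qed.

Lemma sabs_id k : sp 0 k -> sabs M k = k.
Proof. by move=> h; rewrite sabsE m_id // m_negK // addr0. Qed.

Lemma le_sabs x : le x (sabs M x).
Proof.
rewrite sabsE; apply: (po_trans lep (m x)); first exact: m_ge.
have := cp_addle lep lec (po_refl lep (m x)) (m_pos (- x)); by rewrite addr0.
Qed.

Lemma le_sabsN x : le (- sabs M x) x.
Proof.
rewrite sabsE; rewrite -[x in le _ x]opprK; apply: cp_neg => //.
apply: (po_trans lep (m (- x))); first exact: m_ge.
have := cp_addle lep lec (m_pos x) (po_refl lep (m (- x))); by rewrite add0r.
Qed.

Lemma m_le_sabs y : le (m y) (sabs M y).
Proof.
rewrite sabsE; have := cp_addle lep lec (po_refl lep (m y)) (m_pos (- y)); by rewrite addr0.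
Qed.

End S.

Theorem theorem5p18 (R : realType) (V : lmodType R) (M : mixed_lattice V)
  (hqr : quasi_regular M) (A : V -> Prop) (hA : linear_subspace A) :
  ml_ideal M A <->
  (forall x y : V, A y -> ml_le M (sabs M x) (sabs M y) -> A x).
Proof.
have lep := ml_le_po M; have spp := ml_sp_po M.
have lec := ml_le_comp M; have spc := ml_sp_comp M.
have [A0 [AD AZ]] := hA.
have AN : forall x, A x -> A (- x).
  by move=> x hx; rewrite -scaleN1r; apply: AZ.
split.
- move=> [_ [Acl Aconv]] x y hy hs.
  have Am : forall z, A z -> A (ml_up M 0 z) by move=> z hz; case: (Acl 0 z A0 hz).
  have As : A (sabs M y) by rewrite sabsE //; apply: (AD); apply: (Am) => //; apply: (AN).
  apply: (Aconv (- sabs M y) (sabs M y)) => //; first exact: AN.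
  + apply: (po_trans lep (- sabs M x)); last exact: le_sabsN.
    exact: cp_neg.
  + apply: (po_trans lep (sabs M x)) => //; exact: le_sabs.
- move=> P.
  have As : forall x, A x -> A (sabs M x).
    move=> x hx; apply: (P _ x hx); rewrite sabs_id //; [exact: po_refl|exact: sabs_sp].
  have Am : forall z, A z -> A (ml_up M 0 z).
    move=> z hz; apply: (P _ _ (As z hz)).
    rewrite (sabs_id hqr _ (m_sp _)) sabs_id //; [exact: m_le_sabs|exact: sabs_sp].
  have Aconv : forall x y z, A x -> A y -> ml_le M x z -> ml_le M z y -> A z.
    move=> x y z hx hy h1 h2.
    apply: (P _ (sabs M x + sabs M y)); first by apply: (AD); apply: (As).
    rewrite (sabs_id hqr (sabs M x + sabs M y)); last by apply: (cp_addpos spp spc); apply: sabs_sp.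
    rewrite sabsE // addrC; apply: cp_addle => //.
    + apply: (po_trans lep (ml_up M 0 (- x))); first by apply: m_mon => //; apply: cp_neg.
      rewrite sabsE //; have := cp_addle lep lec (m_pos hqr x) (po_refl lep (ml_up M 0 (- x))).
      by rewrite add0r.
    + apply: (po_trans lep (ml_up M 0 y)); first exact: m_mon.
      exact: m_le_sabs.
  split => //; split => // x y hx hy; split.
  + have [l1 [l2 l3]] := ml_low_spec M x y.
    apply: (Aconv (x - ml_up M 0 (x - y)) y) => //.
    * by apply: (AD) => //; apply: (AN); apply: (Am); apply: (AD) => //; apply: (AN).
    * apply: l3.
      - apply: cp_from0 => //; rewrite opprB addrC addrNK; exact: m_sp.
      - apply: cp_from0 => //; rewrite opprB addrA; apply: cp_to0 => //; idtac.
        have := cp_add lec y (m_ge (x - y)); by rewrite subrK addrC.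
  + have [u1 [u2 u3]] := ml_up_spec M x y.
    apply: (Aconv y (x + ml_up M 0 (y - x))) => //.
    * by apply: (AD) => //; apply: (Am); apply: (AD) => //; apply: (AN).
    * apply: u3.
      - apply: cp_from0 => //; rewrite [x + _]addrC addrK; exact: m_sp.
      - have := cp_add lec x (m_ge (y - x)); by rewrite subrK addrC.
Qed.
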